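(* Let $P$ be an algebraic $L$-dcpo. Then $\Sigma_LP=(P,\sigma_L(P))$ is a strong locally super-compact $L$-topological space.
   Context: $L$ is a frame with implication $\to$. $L$-subsets: maps to $L$; nonempty: $\bigvee A=1$; ${\rm sub}_X(A,B)=\bigwedge_xA(x)\to B(x)$. $L$-topology: $\mathcal O(X)\subseteq L^X$ closed under finite meets and arbitrary joins containing constants. Base: $\mathcal B\subseteq\mathcal O(X)$ with $A=\bigvee_{B\in\mathcal B}{\rm sub}_X(B,A)\wedge B$ for each open $A$. Super-compact: nonempty $A$ with ${\rm sub}_X(A,\bigvee_iV_i)=\bigvee_i{\rm sub}_X(A,V_i)$ for all families of open $V_i$. Strong locally super-compact: has a base of super-compact open sets. $L$-order $e$ on $P$: $e(x,x)=1$, $e(x,y)\wedge e(y,z)\le e(x,z)$, $e(x,y)\wedge e(y,x)=1\Rightarrow x=y$. ${\downarrow}y(x)=e(x,y)$; $\sqcup A=x$ iff $e(x,y)={\rm sub}_P(A,{\downarrow}y)$ for all $y$; directed: nonempty with $D(x)\wedge D(y)\le\bigvee_zD(z)\wedge e(x,z)\wedge e(y,z)$; ideal: directed lower set; $L$-dcpo: every directed $L$-subset has a supremum. ${\Downarrow}x(y)=\bigwedge\{e(x,\sqcup I)\to I(y):I\text{ ideal with a supremum}\}$. Compact: ${\Downarrow}x(x)=1$; $K(P)$ the set of compact elements; $k(x)(y)=e(y,x)$ if $y\in K(P)$, else $0$; algebraic $L$-dcpo: $L$-dcpo with every $k(x)$ directed and $\sqcup k(x)=x$. $\sigma_L(P)$: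 upper sets $A$ ($A(x)\wedge e(x,y)\le A(y)$) with $A(\sqcup D)=\bigvee_xA(x)\wedge D(x)$ for every directed $D$. *)

(* Defs.v *)
From Stdlib Require Import Classical ClassicalEpsilon.

Set Implicit Arguments.
Unset Strict Implicit.

Record frame := Frame {
  car :> Type;
  fle : car -> car -> Prop;
  fle_refl : forall a, fle a a;
  fle_trans : forall a b c, fle a b -> fle b c -> fle a c;
  fle_antisym : forall a b, fle a b -> fle b a -> a = b;
  fsup : (car -> Prop) -> car;
  fsup_ub : forall (S : car -> Prop) a, S a -> fle a (fsup S);
  fsup_least : forall (S : car -> Prop) b, (forall a, S a -> fle a b) -> fle (fsup S) b;
  fmeet : car -> car -> car;
  fmeet_l : forall a b, fle (fmeet a b) a;
  fmeet_r : forall a b, fle (fmeet a b) b;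
  fmeet_glb : forall a b c, fle c a -> fle c b -> fle c (fmeet a b);
  ftop : car;
  ftop_max : forall a, fle a ftop;
  fimpl : car -> car -> car;
  fimpl_adj : forall a b c, fle (fmeet c a) b <-> fle c (fimpl a b)
}.

Section FrameOps.
Variable L : frame.

Definition fbot : L := fsup (fun _ : L => False).

Definition bigjoin (I : Type) (f : I -> L) : L := fsup (fun a => exists i, a = f i).
Definition bigmeet (I : Type) (f : I -> L) : L :=
  fsup (fun a => forall i, fle a (f i)).

Definition nonemptyL (X : Type) (A : X -> L) : Prop := bigjoin A = ftop L.

Definition subL (X : Type) (A B : X -> L) : L :=
  bigmeet (fun x => fimpl (A x) (B x)).

Definition is_Ltopology (X : Type) (O : (X -> L) -> Prop) : Prop :=
  (forall a : L, O (fun _ => a)) /\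
  (forall A B, O A -> O B -> O (fun x => fmeet (A x) (B x))) /\
  (forall (I : Type) (V : I -> X -> L),
      (forall i, O (V i)) -> O (fun x => bigjoin (fun i => V i x))).

Definition is_base (X : Type) (O B : (X -> L) -> Prop) : Prop :=
  (forall U, B U -> O U) /\
  (forall A, O A ->
     A = (fun x => bigjoin (fun U : {U : X -> L | B U} =>
                               fmeet (subL (proj1_sig U) A) (proj1_sig U x)))).

Definition supercompact (X : Type) (O : (X -> L) -> Prop) (A : X -> L) : Prop :=
  nonemptyL A /\
  forall (I : Type) (V : I -> X -> L), (forall i, O (V i)) ->
    subL A (fun x => bigjoin (fun i => V i x)) = bigjoin (fun i => subL A (V i)).

Definition strong_locally_supercompact (X : Type) (O : (X -> L) -> Prop) : Prop :=
  is_Ltopology O /\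
  exists B : (X -> L) -> Prop, is_base O B /\ forall U, B U -> supercompact O U.

Section LOrder.
Variables (P : Type) (e : P -> P -> L).

Definition is_Lorder : Prop :=
  (forall x, e x x = ftop L) /\
  (forall x y z, fle (fmeet (e x y) (e y z)) (e x z)) /\
  (forall x y, fmeet (e x y) (e y x) = ftop L -> x = y).

Definition down (y : P) : P -> L := fun x => e x y.

Definition is_sup (A : P -> L) (x : P) : Prop :=
  forall y, e x y = subL A (down y).

Definition directed (D : P -> L) : Prop :=
  nonemptyL D /\
  forall x y, fle (fmeet (D x) (D y))
                  (bigjoin (fun z => fmeet (D z) (fmeet (e x z) (e y z)))).

Definition lower_set (A : P -> L) : Prop :=
  forall x y, fle (fmeet (A x) (e y x)) (A y).

Definition upper_set (A : P -> L) : Prop :=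
  forall x y, fle (fmeet (A x) (e x y)) (A y).

Definition ideal (I : P -> L) : Prop := directed I /\ lower_set I.

Definition Ldcpo : Prop := forall D, directed D -> exists x, is_sup D x.

Definition waybelow (x : P) : P -> L := fun y =>
  bigmeet (fun p : {p : (P -> L) * P | ideal (fst p) /\ is_sup (fst p) (snd p)} =>
             fimpl (e x (snd (proj1_sig p))) (fst (proj1_sig p) y)).

Definition compact (x : P) : Prop := waybelow x x = ftop L.

Definition kset (x : P) : P -> L := fun y =>
  if excluded_middle_informative (compact y) then e y x else fbot.

Definition algebraic : Prop :=
  Ldcpo /\ forall x, directed (kset x) /\ is_sup (kset x) x.

Definition sigmaL (A : P -> L) : Prop :=
  upper_set A /\
  forall D s, directed D -> is_sup D s ->
    A s = bigjoin (fun x => fmeet (A x) (D x)).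

End LOrder.
End FrameOps.

(* Main.v *)
Require Import Defs.
From Stdlib Require Import Classical ClassicalEpsilon FunctionalExtensionality.

Set Implicit Arguments.
Unset Strict Implicit.

Ltac mproj := first [ apply fle_refl
  | eapply fle_trans; [apply fmeet_l | mproj]
  | eapply fle_trans; [apply fmeet_r | mproj] ].
Ltac msplit := repeat apply fmeet_glb.
Ltac mm := msplit; mproj.

Section F.
Variable L : frame.

Lemma le_eq (a b : L) : a = b -> fle a b.
Proof. intros ->; apply fle_refl. Qed.

Lemma mp (a b : L) : fle (fmeet (fimpl a b) a) b.
Proof. apply fimpl_adj, fle_refl. Qed.

Lemma bj_ub I (f : I -> L) i : fle (f i) (bigjoin f).
Proof. unfold bigjoin; apply fsup_ub; eauto. Qed.

Lemma bj_least I (f : I -> L) b : (forall i, fle (f i) b) -> fle (bigjoin f) b.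
Proof. intros H; unfold bigjoin; apply fsup_least; intros a [i ->]; auto. Qed.

Lemma bj_mono I (f g : I -> L) : (forall i, fle (f i) (g i)) -> fle (bigjoin f) (bigjoin g).
Proof. intros H; apply bj_least; intro i; eapply fle_trans; [apply H|apply bj_ub]. Qed.

Lemma bm_lb I (f : I -> L) i : fle (bigmeet f) (f i).
Proof. unfold bigmeet; apply fsup_least; auto. Qed.

Lemma bm_greatest I (f : I -> L) c : (forall i, fle c (f i)) -> fle c (bigmeet f).
Proof. intros H; unfold bigmeet; apply fsup_ub; auto. Qed.

Lemma mj_l I (f : I -> L) c X : (forall i, fle (fmeet (f i) c) X) -> fle (fmeet (bigjoin f) c) X.
Proof. intros H; apply fimpl_adj, bj_least; intro i; apply fimpl_adj, H. Qed.

Lemma mj_r I (f : I -> L) c X : (forall i, fle (fmeet c (f i)) X) -> fle (fmeet c (bigjoin f)) X.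
Proof. intros H. eapply fle_trans; [|apply mj_l with (c := c)].
  - mm.
  - intro i; eapply fle_trans; [|apply (H i)]; mm. Qed.

Lemma sub_elim X (A B : X -> L) x : fle (fmeet (subL A B) (A x)) (B x).
Proof. eapply fle_trans; [|apply (mp (A x))]. apply fmeet_glb; [|apply fmeet_r].
  eapply fle_trans; [apply fmeet_l|]. apply (bm_lb (fun x => fimpl (A x) (B x))). Qed.

Lemma sub_intro X (A B : X -> L) c : (forall x, fle (fmeet c (A x)) (B x)) -> fle c (subL A B).
Proof. intros H; apply bm_greatest; intro x; apply fimpl_adj, H. Qed.

Lemma top_le (a : L) : fle (ftop L) a -> a = ftop L.
Proof. intros; apply fle_antisym; auto using ftop_max. Qed.

End F.

Section M.
Variables (L : frame) (P : Type) (e : P -> P -> L).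
Hypothesis Hord : is_Lorder e.

Lemma erefl' x : e x x = ftop L.
Proof. apply Hord. Qed.
Lemma etr x y z : fle (fmeet (e x y) (e y z)) (e x z).
Proof. apply Hord. Qed.

Lemma sup_ub D s x : is_sup e D s -> fle (D x) (e x s).
Proof. intros H. eapply fle_trans; [|apply (sub_elim D (down e s) x)].
  apply fmeet_glb; [|apply fle_refl]. rewrite <- H, erefl'. apply ftop_max. Qed.

Lemma sup_le D s y c : is_sup e D s -> (forall x, fle (fmeet c (D x)) (e x y)) -> fle c (e s y).
Proof. intros H H'. rewrite H. apply sub_intro. exact H'. Qed.

Lemma open_le A D s x : sigmaL e A -> is_sup e D s -> fle (fmeet (A x) (D x)) (A s).
Proof. intros [Hu _] Hs. eapply fle_trans; [|apply (Hu x s)].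
  apply fmeet_glb; [apply fmeet_l|]. eapply fle_trans; [apply fmeet_r|]. now apply sup_ub. Qed.

Lemma topo : is_Ltopology (sigmaL e).
Proof.
  split; [|split].
  - intro a; split.
    + intros x y; apply fmeet_l.
    + intros D s [Hne _] _. apply fle_antisym.
      * eapply fle_trans; [|apply mj_r with (f := D)].
        -- apply fmeet_glb; [apply fle_refl|]. rewrite Hne. apply ftop_max.
        -- intro i. apply (bj_ub (fun x => fmeet a (D x)) i).
      * apply bj_least; intro; apply fmeet_l.
  - intros A B HA HB. split.
    + intros x y. destruct HA as [HA _]; destruct HB as [HB _]. apply fmeet_glb.
      * eapply fle_trans; [|apply HA with (x := x)]; mm.
      * eapply fle_trans; [|apply HB with (x := x)]; mm.
    + intros D s Hd Hs. apply fle_antisym.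
      * destruct HA as [HAu HA]; destruct HB as [HBu HB].
        eapply fle_trans; [apply fmeet_glb; [eapply fle_trans; [apply fmeet_l|apply le_eq, (HA D s Hd Hs)]
                                          |eapply fle_trans; [apply fmeet_r|apply le_eq, (HB D s Hd Hs)]]|].
        apply mj_l; intro x; apply mj_r; intro y.
        eapply fle_trans; [apply fmeet_glb with (a := fmeet (A x) (B y)) (b := fmeet (D x) (D y)); mm|].
        eapply fle_trans; [apply fmeet_glb; [apply fmeet_l| eapply fle_trans; [apply fmeet_r|apply (proj2 Hd)]]|].
        apply mj_r; intro z.
        eapply fle_trans; [|apply (bj_ub (fun x => fmeet (fmeet (A x) (B x)) (D x)) z)].
        msplit; [ eapply fle_trans; [|apply (HAu x z)] | eapply fle_trans; [|apply (HBu y z)] | ]; mm.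
      * apply bj_least; intro x. apply fmeet_glb.
        -- eapply fle_trans; [|apply (open_le x HA Hs)]; mm.
        -- eapply fle_trans; [|apply (open_le x HB Hs)]; mm.
  - intros I V HV. split.
    + intros x y. apply mj_l; intro i. eapply fle_trans; [apply (proj1 (HV i) x y)|].
      apply (bj_ub (fun i => V i y)).
    + intros D s Hd Hs. apply fle_antisym.
      * apply bj_least; intro i. rewrite (proj2 (HV i) D s Hd Hs).
        apply bj_mono; intro x. apply fmeet_glb; [|apply fmeet_r].
        eapply fle_trans; [apply fmeet_l|]. apply (bj_ub (fun i => V i x)).
      * apply bj_least; intro x. apply mj_l; intro i.
        eapply fle_trans; [apply (open_le x (HV i) Hs)|].
        apply (bj_ub (fun i => V i s)).
Qed.

Definition lc (D : P -> L) : P -> L := fun y => bigjoin (fun x => fmeet (D x) (e y x)).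

Lemma lc_ge D y : fle (D y) (lc D y).
Proof. eapply fle_trans; [|apply (bj_ub (fun x => fmeet (D x) (e y x)) y)].
  apply fmeet_glb; [apply fle_refl|]. rewrite erefl'; apply ftop_max. Qed.

Lemma lc_ideal D s : directed e D -> is_sup e D s -> ideal e (lc D) /\ is_sup e (lc D) s.
Proof.
  intros [Hne Hdir] Hs. split; [split; [split|]|].
  - apply top_le. rewrite <- Hne at 1. apply bj_mono; intro; apply lc_ge.
  - intros a b. apply mj_l; intro x; apply mj_r; intro x'.
    eapply fle_trans; [apply fmeet_glb with (a := fmeet (e a x) (e b x')) (b := fmeet (D x) (D x')); mm|].
    eapply fle_trans; [apply fmeet_glb; [apply fmeet_l| eapply fle_trans; [apply fmeet_r|apply (Hdir x x')]]|].
    apply mj_r; intro z.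
    eapply fle_trans; [|apply (bj_ub (fun z => fmeet (lc D z) (fmeet (e a z) (e b z))) z)].
    msplit.
    + eapply fle_trans; [|apply lc_ge]; mm.
    + eapply fle_trans; [|apply (etr a x z)]; mm.
    + eapply fle_trans; [|apply (etr b x' z)]; mm.
  - intros x y. apply mj_l; intro w.
    eapply fle_trans; [|apply (bj_ub (fun w => fmeet (D w) (e y w)) w)].
    msplit; [mm|]. eapply fle_trans; [|apply (etr y x w)]; mm.
  - intro y. apply fle_antisym.
    + apply sub_intro; intro z. apply mj_r; intro x. unfold down.
      eapply fle_trans; [|apply (etr z x y)]. msplit; [mm|].
      eapply fle_trans; [|apply (etr x s y)]. msplit; [|mm].
      eapply fle_trans; [|apply (sup_ub x Hs)]; mm.
    + apply sup_le with (D := D); auto. intro x.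
      eapply fle_trans; [|apply (sub_elim (lc D) (down e y) x)].
      msplit; [mm|]. eapply fle_trans; [|apply lc_ge]; mm.
Qed.

Lemma up_open k : compact e k -> sigmaL e (fun x => e k x).
Proof.
  intros Hk. split.
  - intros x y; apply etr.
  - intros D s Hd Hs. apply fle_antisym.
    + destruct (lc_ideal Hd Hs) as [HI HIs].
      pose (p := exist (fun p : (P -> L) * P => ideal e (fst p) /\ is_sup e (fst p) (snd p))
                 (lc D, s) (conj HI HIs)).
      assert (H1 : fle (ftop L) (fimpl (e k s) (lc D k))).
      { unfold compact, waybelow in Hk. rewrite <- Hk.
        apply (bm_lb (fun p : {p : (P -> L) * P | ideal e (fst p) /\ is_sup e (fst p) (snd p)} =>
             fimpl (e k (snd (proj1_sig p))) (fst (proj1_sig p) k)) p). }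
      eapply fle_trans; [|eapply fle_trans; [apply (mp (e k s) (lc D k))|]].
      * msplit; [eapply fle_trans; [apply ftop_max|exact H1]|apply fle_refl].
      * apply bj_mono; intro x. mm.
    + apply bj_least; intro x. eapply fle_trans; [|apply (etr k x s)].
      msplit; [mm|]. eapply fle_trans; [|apply (sup_ub x Hs)]; mm.
Qed.

Lemma sub_up k A : upper_set e A -> subL (fun x => e k x) A = A k.
Proof.
  intros Hu. apply fle_antisym.
  - eapply fle_trans; [|apply (sub_elim (fun x => e k x) A k)].
    msplit; [apply fle_refl|]. simpl. rewrite erefl'. apply ftop_max.
  - apply sub_intro; intro x. apply Hu.
Qed.

End M.

Unset Implicit Arguments.

Theorem proposition5p6 (L : frame) (P : Type) (e : P -> P -> L) :
  is_Lorder e -> algebraic e ->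
  strong_locally_supercompact (sigmaL e).
Proof.
  intros Hord [Hdcpo Halg]. split; [apply topo; auto|].
  exists (fun U => exists k, compact e k /\ U = (fun x => e k x)). split; [split|].
  - intros U [k [Hk ->]]. apply up_open; auto.
  - intros A HA. apply functional_extensionality; intro x. apply fle_antisym.
    + destruct (Halg x) as [Hd Hs].
      rewrite (proj2 HA (kset e x) x Hd Hs).
      apply bj_least; intro y. unfold kset.
      destruct (excluded_middle_informative (compact e y)) as [Hy|Hy].
      * pose (U := exist (fun U => exists k, compact e k /\ U = (fun x => e k x))
                    (fun x => e y x) (ex_intro _ y (conj Hy eq_refl))).
        eapply fle_trans; [|apply (bj_ub (fun U : {U : P -> L | exists k, compact e k /\ U = (fun x => e k x)} =>
                               fmeet (subL (proj1_sig U) A) (proj1_sig U x)) U)].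
        simpl. rewrite (sub_up Hord y (proj1 HA)). apply fle_refl.
      * eapply fle_trans; [apply fmeet_r|]. unfold fbot. apply fsup_least. intros _ [].
    + apply bj_least; intros [U HU]. simpl. apply sub_elim.
  - intros U [k [Hk ->]]. split.
    + apply top_le. eapply fle_trans; [|apply (bj_ub (fun x => e k x) k)]. rewrite erefl'; auto. apply fle_refl.
    + intros I V HV. rewrite sub_up; auto.
      * apply f_equal. apply functional_extensionality; intro i. rewrite sub_up; auto. apply (proj1 (HV i)).
      * apply (proj1 (proj2 (proj2 (topo Hord)) I V HV)).
Qed.
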